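(* Let $\gamma:[0,l]\times[0,w)\to E_1^4$, $(s,t)\mapsto\gamma(s,t)$, be a smooth inextensible one-parameter family of partially null curves in $E_1^4$ parametrized by arclength ($\|\partial\gamma/\partial s\|\equiv1$), with Frenet frame $\{T,N,B_1,B_2\}$, curvatures $k_1,k_2$ (and $k_3\equiv0$), and write $$\frac{\partial\gamma}{\partial t}=\beta_1T+\beta_2N+\beta_3B_1+\beta_4B_2$$ with smooth scalar functions $\beta_i$. Then $$\frac{\partial k_1}{\partial t}=\frac{\partial^2\beta_2}{\partial s^2}+\frac{\partial(\beta_1k_1)}{\partial s}-\frac{\partial(\beta_4k_2)}{\partial s}-\frac{\partial\beta_4}{\partial s}k_2.$$
   Context: $E_1^4$ is $\mathbb{R}^4$ with the Lorentzian metric $\langle x,y\rangle=-x_1y_1+x_2y_2+x_3y_3+x_4y_4$ and $\|x\|=\sqrt{|\langle x,x\rangle|}$. A partially null curve is a spacelike curve whose first binormal is a null vector. For such a curve parametrized by arclength $s$, its Frenet frame $\{T,N,B_1,B_2\}$ ($T=\partial\gamma/\partial s$) satisfies $\langle T,T\rangle=\langle N,N\rangle=1$, $\langle B_1,B_1\rangle=\langle B_2,B_2\rangle=0$, $\langle B_1,B_2\rangle=1$, all other inner products zero, and the Frenet equations $T'=k_1N$, $N'=-k_1T+k_2B_1$, $B_1'=k_3B_1$, $B_2'=-k_2N-k_3B_2$, with $k_3\equiv0$. In the family, each $s\mapsto\gamma(s,t)$ is such a curve and frame and curvatures are smooth in $(s,t)$. The flow is inextensible if $\frac{\partial}{\partial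 t}\|\partial\gamma/\partial u\|=0$. *)

(* Defs.v *)
From Stdlib Require Import Reals List.
From Coquelicot Require Import Coquelicot.
Open Scope R_scope.

(* A vector of E_1^4 is represented by its coordinate function; only the
   coordinates 0,1,2,3 (i.e. x_1,...,x_4) are meaningful. *)
Definition V4 := nat -> R.

Definition lor (x y : V4) : R := - x 0%nat * y 0%nat + x 1%nat * y 1%nat
  + x 2%nat * y 2%nat + x 3%nat * y 3%nat.

Definition lnorm (x : V4) : R := sqrt (Rabs (lor x x)).

Definition ps (f : R -> R -> R) : R -> R -> R :=
  fun s t => Derive (fun x => f x t) s.
Definition pt (f : R -> R -> R) : R -> R -> R :=
  fun s t => Derive (fun y => f s y) t.

Definition psV (F : R -> R -> V4) : R -> R -> V4 :=
  fun s t i => ps (fun a b => F a b i) s t.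
Definition ptV (F : R -> R -> V4) : R -> R -> V4 :=
  fun s t i => pt (fun a b => F a b i) s t.

Fixpoint iter_partial (w : list bool) (f : R -> R -> R) : R -> R -> R :=
  match w with
  | nil => f
  | b :: w' => (if b then ps else pt) (iter_partial w' f)
  end.

Definition smooth_on (U : R * R -> Prop) (f : R -> R -> R) : Prop :=
  forall (w : list bool) (p : R * R), U p ->
    ex_derive (fun x => iter_partial w f x (snd p)) (fst p) /\
    ex_derive (fun y => iter_partial w f (fst p) y) (snd p) /\
    continuous (fun q : R * R => iter_partial w f (fst q) (snd q)) p.

Definition smoothV_on (U : R * R -> Prop) (F : R -> R -> V4) : Prop :=
  forall i : nat, (i < 4)%nat -> smooth_on U (fun s t => F s t i).

Definition dom (l w : R) (s t : R) : Prop := 0 <= s <= l /\ 0 <= t < w.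

(* Main.v *)
Require Import Defs.
From Stdlib Require Import Reals List Lra Lia.
From Coquelicot Require Import Coquelicot.
Open Scope R_scope.

Lemma derive_agree (f g : R -> R) a b x : a < b -> a <= x <= b ->
  (forall y, a <= y <= b -> f y = g y) -> ex_derive f x -> ex_derive g x ->
  Derive f x = Derive g x.
Proof.
intros Hab Hx Hfg Hf Hg.
pose proof (Derive_correct _ _ Hf) as Df. pose proof (Derive_correct _ _ Hg) as Dg.
apply is_derive_Reals in Df. apply is_derive_Reals in Dg.
pose proof (derivable_pt_lim_minus _ _ _ _ _ Df Dg) as Dh.
set (d := Derive f x - Derive g x) in *.
destruct (Req_dec d 0) as [H0|H0]. { unfold d in H0; lra. }
exfalso.
assert (He : 0 < Rabs d / 2) by (pose proof (Rabs_pos_lt _ H0); lra).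
destruct (Dh _ He) as [del Hdel].
pose proof (cond_pos del) as Hdp.
assert (Hk : exists k, k <> 0 /\ Rabs k < del /\ a <= x + k <= b).
{ destruct (Rlt_or_le x b) as [Hxb|Hxb].
  - exists (Rmin (del/2) (b - x)).
    pose proof (Rmin_l (del/2) (b-x)). pose proof (Rmin_r (del/2) (b-x)).
    assert (0 < Rmin (del/2) (b-x)) by (apply Rmin_case; lra).
    rewrite Rabs_pos_eq by lra. repeat split; lra.
  - exists (- Rmin (del/2) (b - a)).
    pose proof (Rmin_l (del/2) (b-a)). pose proof (Rmin_r (del/2) (b-a)).
    assert (0 < Rmin (del/2) (b-a)) by (apply Rmin_case; lra).
    rewrite Rabs_Ropp, Rabs_pos_eq by lra. repeat split; lra. }
destruct Hk as [k [Hk0 [Hkd Hkab]]].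
specialize (Hdel k Hk0 Hkd).
unfold minus_fct in Hdel.
rewrite (Hfg (x+k)) in Hdel by lra. rewrite (Hfg x) in Hdel by lra.
replace ((g (x + k) - g (x + k) - (g x - g x)) / k - d) with (- d) in Hdel by (field; auto).
rewrite Rabs_Ropp in Hdel. lra.
Qed.

Lemma smooth_schwarz U f s t : open U -> smooth_on U f -> U (s,t) ->
  ps (pt f) s t = pt (ps f) s t.
Proof.
intros HUo Hf Hst. unfold ps, pt.
apply Schwarz.
- apply locally_2d_locally.
  specialize (HUo _ Hst).
  eapply filter_imp; [|exact HUo].
  intros [u v] Huv. simpl.
  destruct (Hf nil (u,v) Huv) as [A1 [A2 _]].
  destruct (Hf (false::nil) (u,v) Huv) as [B1 _].
  destruct (Hf (true::nil) (u,v) Huv) as [_ [C2 _]].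
  simpl in *. unfold ps, pt in *. tauto.
- apply continuity_2d_pt_filterlim.
  exact (proj2 (proj2 (Hf (true::false::nil) (s,t) Hst))).
- apply continuity_2d_pt_filterlim.
  exact (proj2 (proj2 (Hf (false::true::nil) (s,t) Hst))).
Qed.
Lemma D4 (b1 b2 b3 b4 x1 x2 x3 x4 : R->R) y :
 ex_derive b1 y -> ex_derive b2 y -> ex_derive b3 y -> ex_derive b4 y ->
 ex_derive x1 y -> ex_derive x2 y -> ex_derive x3 y -> ex_derive x4 y ->
 ex_derive (fun z => b1 z * x1 z + b2 z * x2 z + b3 z * x3 z + b4 z * x4 z) y /\
 Derive (fun z => b1 z * x1 z + b2 z * x2 z + b3 z * x3 z + b4 z * x4 z) y =
 Derive b1 y * x1 y + b1 y * Derive x1 y + Derive b2 y * x2 y + b2 y * Derive x2 y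
 + Derive b3 y * x3 y + b3 y * Derive x3 y + Derive b4 y * x4 y + b4 y * Derive x4 y.
Proof.
intros. split. { auto_derive. repeat split; auto. }
apply is_derive_unique. auto_derive. repeat split; auto.
change (fun x : R => b1 x) with b1; change (fun x : R => b2 x) with b2;
change (fun x : R => b3 x) with b3; change (fun x : R => b4 x) with b4;
change (fun x : R => x1 x) with x1; change (fun x : R => x2 x) with x2;
change (fun x : R => x3 x) with x3; change (fun x : R => x4 x) with x4. ring.
Qed.

Lemma exR_plus (f g : R -> R) x : ex_derive f x -> ex_derive g x -> ex_derive (fun z => f z + g z) x.
Proof. intros; exact (@ex_derive_plus R_AbsRing R_NormedModule f g x H H0). Qed.
Lemma exR_minus (f g : R -> R) x : ex_derive f x -> ex_derive g x -> ex_derive (fun z => f z - g z) x.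
Proof. intros; exact (@ex_derive_minus R_AbsRing R_NormedModule f g x H H0). Qed.

Definition dV (X : R -> V4) y : V4 := fun i => Derive (fun z => X z i) y.

Lemma derive_lor (X Y : R -> V4) y :
  (forall i, (i < 4)%nat -> ex_derive (fun z => X z i) y) ->
  (forall i, (i < 4)%nat -> ex_derive (fun z => Y z i) y) ->
  ex_derive (fun z => lor (X z) (Y z)) y /\
  Derive (fun z => lor (X z) (Y z)) y = lor (dV X y) (Y y) + lor (X y) (dV Y y).
Proof.
intros HX HY.
assert (E : forall z, lor (X z) (Y z) =
  (fun z => - X z 0%nat) z * (fun z => Y z 0%nat) z + (fun z => X z 1%nat) z * (fun z => Y z 1%nat) z
  + (fun z => X z 2%nat) z * (fun z => Y z 2%nat) z + (fun z => X z 3%nat) z * (fun z => Y z 3%nat) z).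
{ intros; unfold lor; simpl; ring. }
assert (HN : ex_derive (fun z => - X z 0%nat) y) by (apply (@ex_derive_opp R_AbsRing R_NormedModule (fun z => X z 0%nat) y); apply HX; lia).
destruct (D4 (fun z => - X z 0%nat) (fun z => X z 1%nat) (fun z => X z 2%nat) (fun z => X z 3%nat)
   (fun z => Y z 0%nat) (fun z => Y z 1%nat) (fun z => Y z 2%nat) (fun z => Y z 3%nat) y)
  as [D1 D2];
  [exact HN| exact (HX 1%nat ltac:(lia)) | exact (HX 2%nat ltac:(lia)) | exact (HX 3%nat ltac:(lia))
  | exact (HY 0%nat ltac:(lia)) | exact (HY 1%nat ltac:(lia)) | exact (HY 2%nat ltac:(lia)) | exact (HY 3%nat ltac:(lia))|].
split.
- eapply ex_derive_ext; [|exact D1]. intros; simpl; rewrite E; reflexivity.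
- rewrite (Derive_ext _ _ _ E). rewrite D2. rewrite Derive_opp.
  unfold lor, dV. ring.
Qed.

Lemma lor_sym X Y : lor X Y = lor Y X.
Proof. unfold lor; ring. Qed.

Lemma lor_ext X X' Y Y' : (forall i, (i<4)%nat -> X i = X' i) ->
  (forall i, (i<4)%nat -> Y i = Y' i) -> lor X Y = lor X' Y'.
Proof. intros H1 H2. unfold lor. rewrite !H1, !H2 by auto. reflexivity. Qed.

Lemma lor_lin4 a b c d (X Y Z W V : V4) :
  lor (fun i => a * X i + b * Y i + c * Z i + d * W i) V =
  a * lor X V + b * lor Y V + c * lor Z V + d * lor W V.
Proof. unfold lor; ring. Qed.

Lemma lor_scal a (X V : V4) : lor (fun i => a * X i) V = a * lor X V.
Proof. unfold lor; ring. Qed.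

Lemma lor_lin2 a b (X Y V : V4) :
  lor (fun i => a * X i + b * Y i) V = a * lor X V + b * lor Y V.
Proof. unfold lor; ring. Qed.

Lemma lor_self_deriv (X : R -> V4) y a b : a < b -> a <= y <= b ->
  (forall z, a <= z <= b -> lor (X z) (X z) = 1) ->
  (forall i, (i < 4)%nat -> ex_derive (fun z => X z i) y) ->
  lor (X y) (dV X y) = 0.
Proof.
intros Hab Hy H1 HX.
destruct (derive_lor X X y HX HX) as [E1 E2].
assert (E3 : Derive (fun z => lor (X z) (X z)) y = Derive (fun _ => 1) y).
{ apply (derive_agree _ _ a b); auto. apply ex_derive_const. }
rewrite E2, Derive_const, (lor_sym (dV X y)) in E3. lra.
Qed.
Theorem theorem3p6
  (l w : R) (Hl : 0 < l) (Hw : 0 < w)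
  (U : R * R -> Prop) (HUo : open U)
  (HU : forall s t, dom l w s t -> U (s, t))
  (gamma T N B1 B2 : R -> R -> V4)
  (k1 k2 k3 beta1 beta2 beta3 beta4 : R -> R -> R)
  (* smoothness of the family, its frame, curvatures and the beta_i *)
  (Hsg : smoothV_on U gamma)
  (HsT : smoothV_on U T) (HsN : smoothV_on U N)
  (HsB1 : smoothV_on U B1) (HsB2 : smoothV_on U B2)
  (Hsk1 : smooth_on U k1) (Hsk2 : smooth_on U k2) (Hsk3 : smooth_on U k3)
  (Hsb1 : smooth_on U beta1) (Hsb2 : smooth_on U beta2)
  (Hsb3 : smooth_on U beta3) (Hsb4 : smooth_on U beta4)
  (* arclength parametrization and inextensibility *)
  (Harc : forall s t, dom l w s t -> lnorm (psV gamma s t) = 1)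
  (Hinext : forall s t, dom l w s t ->
     pt (fun a b => lnorm (psV gamma a b)) s t = 0)
  (* T = d gamma / ds *)
  (HT : forall s t i, dom l w s t -> (i < 4)%nat -> T s t i = psV gamma s t i)
  (* inner products of the frame *)
  (HTT : forall s t, dom l w s t -> lor (T s t) (T s t) = 1)
  (HNN : forall s t, dom l w s t -> lor (N s t) (N s t) = 1)
  (HB1B1 : forall s t, dom l w s t -> lor (B1 s t) (B1 s t) = 0)
  (HB2B2 : forall s t, dom l w s t -> lor (B2 s t) (B2 s t) = 0)
  (HB1B2 : forall s t, dom l w s t -> lor (B1 s t) (B2 s t) = 1)
  (HTN : forall s t, dom l w s t -> lor (T s t) (N s t) = 0)
  (HTB1 : forall s t, dom l w s t -> lor (T s t) (B1 s t) = 0)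
  (HTB2 : forall s t, dom l w s t -> lor (T s t) (B2 s t) = 0)
  (HNB1 : forall s t, dom l w s t -> lor (N s t) (B1 s t) = 0)
  (HNB2 : forall s t, dom l w s t -> lor (N s t) (B2 s t) = 0)
  (* Frenet equations, with k3 = 0 *)
  (Hk3 : forall s t, dom l w s t -> k3 s t = 0)
  (HFT : forall s t i, dom l w s t -> (i < 4)%nat ->
     psV T s t i = k1 s t * N s t i)
  (HFN : forall s t i, dom l w s t -> (i < 4)%nat ->
     psV N s t i = - k1 s t * T s t i + k2 s t * B1 s t i)
  (HFB1 : forall s t i, dom l w s t -> (i < 4)%nat ->
     psV B1 s t i = k3 s t * B1 s t i)
  (HFB2 : forall s t i, dom l w s t -> (i < 4)%nat ->
     psV B2 s t i = - k2 s t * N s t i - k3 s t * B2 s t i)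
  (* variation vector field *)
  (Hvar : forall s t i, dom l w s t -> (i < 4)%nat ->
     ptV gamma s t i = beta1 s t * T s t i + beta2 s t * N s t i
                       + beta3 s t * B1 s t i + beta4 s t * B2 s t i) :
  forall s t, dom l w s t ->
    pt k1 s t =
      ps (ps beta2) s t
      + ps (fun a b => beta1 a b * k1 a b) s t
      - ps (fun a b => beta4 a b * k2 a b) s t
      - ps beta4 s t * k2 s t.
Proof.
intros s t Hd.
assert (exS : forall f, smooth_on U f -> forall wd a b, dom l w a b ->
   ex_derive (fun x => iter_partial wd f x b) a)
  by (intros f Hf wd a b Hab; exact (proj1 (Hf wd (a,b) (HU a b Hab)))).
assert (exT : forall f, smooth_on U f -> forall wd a b, dom l w a b ->
   ex_derive (fun y => iter_partial wd f a y) b)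
  by (intros f Hf wd a b Hab; exact (proj1 (proj2 (Hf wd (a,b) (HU a b Hab))))).
destruct Hd as [Hs Ht].
assert (Hsd : forall s', 0 <= s' <= l -> dom l w s' t) by (intros; split; lra).
assert (Htd : forall y, t <= y <= (t+w)/2 -> dom l w s y) by (intros; split; lra).
assert (Hd : dom l w s t) by (split; lra).
assert (Htw : t < (t+w)/2) by lra.
assert (S1 : pt k1 s t = Derive (fun y => lor (psV T s y) (N s y)) t).
{ unfold pt. apply (derive_agree _ _ t ((t+w)/2)); [lra|lra| |exact (exT _ Hsk1 nil s t Hd)|].
  - intros y Hy. pose proof (Htd y Hy) as Hdy.
    rewrite (lor_ext (psV T s y) (fun i => k1 s y * N s y i) (N s y) (N s y))
      by (intros; first [reflexivity | apply HFT; auto]).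
    rewrite lor_scal, HNN by auto. ring.
  - apply derive_lor; intros i Hi.
    + exact (exT _ (HsT i Hi) (true::nil) s t Hd).
    + exact (exT _ (HsN i Hi) nil s t Hd). }
destruct (derive_lor (fun y => psV T s y) (fun y => N s y) t) as [_ S2].
{ intros i Hi. exact (exT _ (HsT i Hi) (true::nil) s t Hd). }
{ intros i Hi. exact (exT _ (HsN i Hi) nil s t Hd). }
rewrite S1, S2. clear S1 S2.
assert (S3 : lor (psV T s t) (dV (fun y => N s y) t) = 0).
{ rewrite (lor_ext (psV T s t) (fun i => k1 s t * N s t i) (dV (fun y => N s y) t) (dV (fun y => N s y) t))
      by (intros; first [reflexivity | apply HFT; auto]).
  rewrite lor_scal.
  rewrite (lor_self_deriv (fun y => N s y) t t ((t+w)/2)); [ring|lra|lra| |].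
  - intros z Hz. apply HNN. apply Htd; auto.
  - intros i Hi. exact (exT _ (HsN i Hi) nil s t Hd). }
rewrite S3. clear S3.
set (P := fun z : R => (fun i : nat => pt (fun a b => T a b i) z t) : V4).
assert (S4 : lor (dV (fun y => psV T s y) t) (N s t) = lor (dV P s) (N s t)).
{ apply lor_ext; [|reflexivity]. intros i Hi. unfold dV, P.
  symmetry. exact (smooth_schwarz U (fun a b => T a b i) s t HUo (HsT i Hi) (HU s t Hd)). }
rewrite S4. clear S4.
destruct (derive_lor P (fun z => N z t) s) as [S5e S5].
{ intros i Hi. exact (exS _ (HsT i Hi) (false::nil) s t Hd). }
{ intros i Hi. exact (exS _ (HsN i Hi) nil s t Hd). }
set (cT := fun z => ps beta1 z t - beta2 z t * k1 z t).
set (cN := fun z => beta1 z t * k1 z t + ps beta2 z t - beta4 z t * k2 z t).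
set (cB1 := fun z => ps beta3 z t + beta2 z t * k2 z t + beta3 z t * k3 z t).
set (cB2 := fun z => ps beta4 z t - beta4 z t * k3 z t).
assert (HP : forall s', 0 <= s' <= l -> forall i, (i < 4)%nat ->
  P s' i = cT s' * T s' t i + cN s' * N s' t i + cB1 s' * B1 s' t i + cB2 s' * B2 s' t i).
{ intros s' Hs' i Hi. pose proof (Hsd s' Hs') as Hd'.
  assert (Htd' : forall y, t <= y <= (t+w)/2 -> dom l w s' y) by (intros; split; lra).
  unfold P.
  transitivity (pt (ps (fun a b => gamma a b i)) s' t).
  { unfold pt at 1. apply (derive_agree _ _ t ((t+w)/2)); [lra|lra| | |].
    - intros y Hy. apply HT; auto.
    - exact (exT _ (HsT i Hi) nil s' t Hd').
    - exact (exT _ (Hsg i Hi) (true::nil) s' t Hd'). }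
  rewrite <- (smooth_schwarz U _ s' t HUo (Hsg i Hi) (HU s' t Hd')).
  transitivity (Derive (fun z => beta1 z t * T z t i + beta2 z t * N z t i
                  + beta3 z t * B1 z t i + beta4 z t * B2 z t i) s').
  { unfold ps at 1. apply (derive_agree _ _ 0 l); [lra|lra| | |].
    - intros z Hz. apply Hvar; auto.
    - exact (exS _ (Hsg i Hi) (false::nil) s' t Hd').
    - apply D4; first [exact (exS _ Hsb1 nil s' t Hd') | exact (exS _ Hsb2 nil s' t Hd')
        | exact (exS _ Hsb3 nil s' t Hd') | exact (exS _ Hsb4 nil s' t Hd')
        | exact (exS _ (HsT i Hi) nil s' t Hd') | exact (exS _ (HsN i Hi) nil s' t Hd')
        | exact (exS _ (HsB1 i Hi) nil s' t Hd') | exact (exS _ (HsB2 i Hi) nil s' t Hd')]. }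
  rewrite (proj2 (D4 (fun z => beta1 z t) (fun z => beta2 z t) (fun z => beta3 z t) (fun z => beta4 z t) (fun z => T z t i) (fun z => N z t i) (fun z => B1 z t i) (fun z => B2 z t i) s' (exS _ Hsb1 nil s' t Hd') (exS _ Hsb2 nil s' t Hd')
        (exS _ Hsb3 nil s' t Hd') (exS _ Hsb4 nil s' t Hd')
        (exS _ (HsT i Hi) nil s' t Hd') (exS _ (HsN i Hi) nil s' t Hd')
        (exS _ (HsB1 i Hi) nil s' t Hd') (exS _ (HsB2 i Hi) nil s' t Hd'))).
  change (Derive (fun z => T z t i) s') with (psV T s' t i).
  change (Derive (fun z => N z t i) s') with (psV N s' t i).
  change (Derive (fun z => B1 z t i) s') with (psV B1 s' t i).
  change (Derive (fun z => B2 z t i) s') with (psV B2 s' t i).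
  rewrite HFT, HFN, HFB1, HFB2 by auto.
  unfold cT, cN, cB1, cB2, ps. ring. }
assert (S7 : lor (P s) (dV (fun z => N z t) s) = k2 s t * cB2 s).
{ rewrite (lor_ext (P s) (P s) _ (fun i => (- k1 s t) * T s t i + k2 s t * B1 s t i))
     by (intros; first [reflexivity | apply HFN; auto]).
  rewrite lor_sym, lor_lin2.
  assert (E0 : lor (T s t) (P s) = 0).
  { change (P s) with (dV (fun y => T s y) t).
    apply (lor_self_deriv (fun y => T s y) t t ((t+w)/2)); [lra|lra| |].
    - intros z Hz. apply HTT. apply Htd; auto.
    - intros i Hi. exact (exT _ (HsT i Hi) nil s t Hd). }
  rewrite E0.
  rewrite (lor_ext (B1 s t) (B1 s t) (P s) _ (fun i _ => eq_refl) (HP s Hs)).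
  rewrite (lor_sym (B1 s t)), lor_lin4.
  rewrite HTB1, HNB1, HB1B1, (lor_sym (B2 s t)), HB1B2 by auto. ring. }
assert (S8 : Derive (fun z => lor (P z) (N z t)) s = Derive cN s).
{ apply (derive_agree _ _ 0 l); [lra|lra| |exact S5e|].
  - intros z Hz. pose proof (Hsd z Hz) as Hdz.
    rewrite (lor_ext (P z) _ (N z t) (N z t) (HP z Hz) (fun i _ => eq_refl)).
    rewrite lor_lin4, HNN, (lor_sym (B1 z t)), (lor_sym (B2 z t)), HTN, HNB1, HNB2
      by auto. ring.
  - unfold cN. apply exR_minus; [apply exR_plus|apply ex_derive_mult].
    + apply ex_derive_mult; [exact (exS _ Hsb1 nil s t Hd)|exact (exS _ Hsk1 nil s t Hd)].
    + exact (exS _ Hsb2 (true::nil) s t Hd).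
    + exact (exS _ Hsb4 nil s t Hd).
    + exact (exS _ Hsk2 nil s t Hd). }
assert (S9 : Derive cN s = ps (fun a b => beta1 a b * k1 a b) s t + ps (ps beta2) s t
      - ps (fun a b => beta4 a b * k2 a b) s t).
{ unfold cN. rewrite Derive_minus, Derive_plus.
  - reflexivity.
  - apply ex_derive_mult; [exact (exS _ Hsb1 nil s t Hd)|exact (exS _ Hsk1 nil s t Hd)].
  - exact (exS _ Hsb2 (true::nil) s t Hd).
  - apply exR_plus. apply ex_derive_mult; [exact (exS _ Hsb1 nil s t Hd)|exact (exS _ Hsk1 nil s t Hd)].
    exact (exS _ Hsb2 (true::nil) s t Hd).
  - apply ex_derive_mult; [exact (exS _ Hsb4 nil s t Hd)|exact (exS _ Hsk2 nil s t Hd)]. }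
assert (K3 : k3 s t = 0) by auto.
assert (EQ : lor (dV P s) (N s t) = Derive (fun z => lor (P z) (N z t)) s - lor (P s) (dV (fun z => N z t) s)) by (rewrite S5; ring).
rewrite EQ, S8, S9, S7. unfold cB2. rewrite K3. ring.
Qed.
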